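(* Let $W,V$ be subspaces of $\mathbb{C}^n$ with $\mathbb{C}^n=W\oplus V^\perp$, let $\{\mathbf{w}_i\}_{i=1}^N$ be a frame for $W$ and let $\{\mathbf{v}_i\}_{i=1}^N$ be an oblique dual frame of $\{\mathbf{w}_i\}_{i=1}^N$ on $V$. Then $$\sum_{i=1}^N|\langle\mathbf{w}_i,\mathbf{v}_i\rangle|^2\ge\frac{d_W^2}{N},$$ where $d_W=\dim W$. Furthermore, equality holds if and only if $\langle\mathbf{w}_i,\mathbf{v}_i\rangle=\frac{d_W}{N}$ for each $i$.
   Context: The inner product on $\mathbb{C}^n$ is $\langle\mathbf{x},\mathbf{y}\rangle=\mathbf{y}^*\mathbf{x}$ (linear in the first argument). $V^\perp$ is the orthogonal complement of $V$. When $\mathbb{C}^n=W\oplus V^\perp$, $\boldsymbol{\pi}_{WV^\perp}$ denotes the oblique projection onto $W$ along $V^\perp$ (identity on $W$, zero on $V^\perp$). A finite family $\{\mathbf{w}_i\}_{i=1}^N\subset W$ is a frame for $W$ if there are $0<A\le B$ with $A\|\mathbf{f}\|^2\le\sum_i|\langle\mathbf{w}_i,\mathbf{f}\rangle|^2\le B\|\mathbf{f}\|^2$ for all $\mathbf{f}\in W$ (equivalently, it spans $W$). A frame $\{\mathbf{v}_i\}_{i=1}^N$ for $V$ (with $\mathbf{v}_i\in V$) is an oblique dual frame of $\{\mathbf{w}_i\}_{i=1}^N$ on $V$ if $\boldsymbol{\pi}_{WV^\perp}\mathbf{f}=\sum_{i=1}^N\langle\mathbf{f},\mathbf{v}_i\rangle\mathbf{w}_i$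 for all $\mathbf{f}\in\mathbb{C}^n$. *)

(* Defs.v *)
(* C^n is modelled as row vectors 'rV[R[i]]_n with R : realType
   (R[i] = complex R from mathcomp-real-closed), subspaces as row spaces of
   square matrices (mxalgebra). *)
From mathcomp Require Import all_boot all_algebra.
From mathcomp Require Import reals complex.
Set Implicit Arguments. Unset Strict Implicit. Unset Printing Implicit Defensive.
Import GRing.Theory Num.Theory.
Local Open Scope ring_scope.

Definition ip (R : realType) (n : nat) (x y : 'rV[R[i]]_n) : R[i] :=
  \sum_(k < n) x 0 k * (y 0 k)^*.

Definition in_perp (R : realType) (n : nat) (V : 'M[R[i]]_n) (x : 'rV[R[i]]_n) : Prop :=
  forall v : 'rV[R[i]]_n, (v <= V)%MS -> ip x v = 0.

Definition direct_sum_perp (R : realType) (n : nat) (W V : 'M[R[i]]_n) : Prop :=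
  (forall f : 'rV[R[i]]_n, exists g h : 'rV[R[i]]_n,
      [/\ (g <= W)%MS, in_perp V h & f = g + h]) /\
  (forall g : 'rV[R[i]]_n, (g <= W)%MS -> in_perp V g -> g = 0).

(* p = pi_{W V^perp} f : the unique g in W with f - g in V^perp
   (unique when C^n = W (+) V^perp) *)
Definition is_oblique_proj (R : realType) (n : nat) (W V : 'M[R[i]]_n)
    (f g : 'rV[R[i]]_n) : Prop :=
  (g <= W)%MS /\ in_perp V (f - g).

Definition is_frame (R : realType) (n N : nat) (W : 'M[R[i]]_n)
    (w : 'I_N -> 'rV[R[i]]_n) : Prop :=
  (forall i, (w i <= W)%MS) /\
  exists A B : R[i], [/\ 0 < A, A <= B &
    forall f : 'rV[R[i]]_n, (f <= W)%MS ->
      A * ip f f <= \sum_(i < N) `|ip (w i) f| ^+ 2 <= B * ip f f].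

Definition oblique_dual_frame (R : realType) (n N : nat) (W V : 'M[R[i]]_n)
    (w v : 'I_N -> 'rV[R[i]]_n) : Prop :=
  is_frame V v /\
  forall f : 'rV[R[i]]_n,
    is_oblique_proj W V f (\sum_(i < N) ip f (v i) *: w i).

(* Main.v *)
Require Import Defs.
From mathcomp Require Import all_boot all_algebra.
From mathcomp Require Import reals complex.
Import GRing.Theory Num.Theory.
Local Open Scope ring_scope.

Lemma trace_idem (F : fieldType) n (A : 'M[F]_n) : A *m A = A -> \tr A = (\rank A)%:R.
Proof.
move=> AA.
have hA := mulmx_base A.
have fC := col_base_full A; have fB := row_base_free A.
move: hA fC fB; set C := col_base A; set B := row_base A; clearbody C B => hA fC fB.
have h1 : B *m C *m B = B.
  apply: (row_full_inj fC).
  by rewrite !mulmxA hA -mulmxA hA AA.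
have h2 : B *m C = 1%:M.
  apply: (row_free_inj fB).
  by rewrite h1 mul1mx.
by rewrite -{1}hA mxtrace_mulC h2 mxtrace1.
Qed.

Section S.
Variable (R : realType) (n : nat).
Definition outer (w v : 'rV[R[i]]_n) : 'M[R[i]]_n := (map_mx Num.conj v)^T *m w.

Lemma outer_mul f w v : f *m outer w v = ip f v *: w.
Proof.
rewrite /outer mulmxA [f *m _]mx11_scalar mul_scalar_mx; congr (_ *: _).
by rewrite mxE /ip; apply: eq_bigr => k _; rewrite !mxE.
Qed.

Lemma outer_tr w v : \tr (outer w v) = ip w v.
Proof.
by rewrite /outer mxtrace_mulC trace_mx11 mxE /ip; apply: eq_bigr => k _; rewrite !mxE.
Qed.
End S.
Arguments outer {R n}.
From mathcomp Require Import ring.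
Lemma cs (R : realType) N (a : 'I_N -> R[i]) (d : nat) :
  \sum_i a i = d%:R ->
  ((d ^ 2)%:R / N%:R <= \sum_(i < N) `|a i| ^+ 2 /\
  (\sum_(i < N) `|a i| ^+ 2 = (d ^ 2)%:R / N%:R <->
   forall i : 'I_N, a i = d%:R / N%:R)).
Proof.
case: N a => [|N] a ha.
  rewrite big_ord0 invr0 mulr0; split=> //; split=> // _ [] //.
set c : R[i] := d%:R / N.+1%:R.
have cc : c^* = c by rewrite /c rmorphM rmorph_nat fmorphV rmorph_nat.
have hB x : (x - c)^* = x^* - c by rewrite rmorphB; congr (_ - _); exact: cc.
have key : \sum_i `|a i - c| ^+ 2 = \sum_i `|a i| ^+ 2 - (d ^ 2)%:R / N.+1%:R.
  under eq_bigr do rewrite normCK hB mulrBl !mulrBr.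
  under [X in _ = X - _]eq_bigr do rewrite normCK.
  rewrite !sumrB -mulr_suml -mulr_sumr -rmorph_sum ha rmorph_nat sumr_const card_ord.
  rewrite /c natrX -mulr_natr.
  have hN : (N.+1%:R : R[i]) != 0 by rewrite pnatr_eq0.
  field.
  by rewrite addrC natr1.
split.
  rewrite -subr_ge0 -key; apply: sumr_ge0 => i _; exact: exprn_ge0 (normr_ge0 _).
split.
  move/eqP; rewrite -subr_eq0 -key => /eqP h i.
  have := @psumr_eq0P _ _ _ _ (fun j _ => exprn_ge0 2 (normr_ge0 (a j - c))) h i isT.
  by move/eqP; rewrite sqrf_eq0 normr_eq0 subr_eq0 => /eqP.
move=> h; apply/eqP; rewrite -subr_eq0 -key; apply/eqP; apply: big1 => i _.
by rewrite h subrr normr0 expr0n.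
Qed.

Theorem lemma3p2 (R : realType) (n N : nat) (W V : 'M[R[i]]_n)
    (w v : 'I_N -> 'rV[R[i]]_n) :
  direct_sum_perp W V ->
  is_frame W w ->
  oblique_dual_frame W V w v ->
  ((\rank W) ^ 2)%:R / N%:R <= \sum_(i < N) `|ip (w i) (v i)| ^+ 2 /\
  (\sum_(i < N) `|ip (w i) (v i)| ^+ 2 = ((\rank W) ^ 2)%:R / N%:R <->
   forall i : 'I_N, ip (w i) (v i) = (\rank W)%:R / N%:R).
Proof.
move=> [_ huniq] _ [_ hproj].
pose M := \sum_i outer (w i) (v i).
have fM f : f *m M = \sum_i ip f (v i) *: w i.
  by rewrite mulmx_sumr; apply: eq_bigr => i _; rewrite outer_mul.
have MW (f : 'rV[R[i]]_n) : (f *m M <= W)%MS by case: (hproj f); rewrite -fM.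
have Mid (g : 'rV[R[i]]_n) : (g <= W)%MS -> g *m M = g.
  move=> gW; apply/eqP; rewrite eq_sym -subr_eq0; apply/eqP; apply: huniq.
    by rewrite addmx_sub // eqmx_opp MW.
  by case: (hproj g); rewrite -fM.
have MM : M *m M = M.
  by apply/row_matrixP => i; rewrite row_mul Mid // rowE MW.
have rk : \rank M = \rank W.
  apply/eqmx_rank/andP; split.
    by apply/row_subP => i; rewrite rowE MW.
  apply/row_subP => i; rewrite -(Mid (row i W) (row_sub i W)); exact: submxMl.
have tr : \sum_i ip (w i) (v i) = (\rank W)%:R.
  rewrite -rk -trace_idem // /M raddf_sum; apply: eq_bigr => i _; by rewrite /= outer_tr.
exact: (@cs R N (fun i => ip (w i) (v i)) _ tr).
Qed.
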